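(* Let $m,n,t\in\mathbf{Z}$ with $\gcd(m,n)=1$ satisfy $$t=\frac{-3(m^{3}+3m^{2}n-6mn^{2}+4n^{3})(m^{3}+3m^{2}n+3mn^{2}+4n^{3})(5m^{3}-3m^{2}n-3mn^{2}+2n^{3})}{(m^{3}-3mn^{2}+n^{3})^{3}}.$$ Then $m^{3}-3mn^{2}+n^{3}=\pm1$ or $m^{3}-3mn^{2}+n^{3}=\pm3$. *)

(* Defs.v *)
From mathcomp Require Import all_boot all_order all_algebra.
Set Implicit Arguments. Unset Strict Implicit. Unset Printing Implicit Defensive.

(* Main.v *)
Require Import Defs.
From mathcomp Require Import all_boot all_order all_algebra.
From mathcomp Require Import zify ring lra.
Import GRing.Theory Num.Theory.
Local Open Scope ring_scope.

Lemma p_dvd_pow (p : nat) (n : int) : prime p -> p != 3%N ->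
  (p%:Z %| 9 * n ^+ 5)%Z -> (p %| `|n|)%N.
Proof.
move=> pp p3; rewrite dvdzE abszM abszX /= (Euclid_dvdM _ _ pp).
have -> : (1 + (1 + (1 + (1 + (1 + (1 + (1 + (1 + 1))))))) = 3 * 3)%N by [].
rewrite (Euclid_dvdM _ _ pp) (dvdn_prime2 pp) //= (negbTE p3) /=.
by rewrite (Euclid_dvdX _ _ pp) andbT.
Qed.

Lemma step (m n D F U V U2 V2 : int) (p : nat) : prime p -> p != 3%N ->
  U*D+V*F = 9 * n^+5 -> U2*D+V2*F = 9 * m^+5 ->
  (p%:Z %| D)%Z -> (p%:Z %| F)%Z -> gcdz m n = 1%N -> False.
Proof.
move=> pp p3 e1 e2 hD hF g.
have h1 : (p%:Z %| 9 * n^+5)%Z by rewrite -e1 rpredD // dvdz_mull.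
have h2 : (p%:Z %| 9 * m^+5)%Z by rewrite -e2 rpredD // dvdz_mull.
have hn : (p%:Z %| n)%Z by rewrite dvdzE; exact: p_dvd_pow _ _ pp p3 h1.
have hm : (p%:Z %| m)%Z by rewrite dvdzE; exact: p_dvd_pow _ _ pp p3 h2.
have : (p%:Z %| gcdz m n)%Z by rewrite dvdz_gcd hm hn.
rewrite g dvdzE /= dvdn1 => /eqP p1.
by move: pp; rewrite p1.
Qed.

Lemma resA (m n : int) (p : nat) : prime p -> p != 3%N ->
  (p%:Z %| (m^+3 - 3* m * n ^+2 + n^+3))%Z -> (p%:Z %| (m^+3 + 3* m ^+2* n - 6* m * n ^+2 + 4* n ^+3))%Z -> gcdz m n = 1%N -> False.
Proof.
move=> pp p3; apply: (step m n _ _ ((-7) * m^+0 * n^+2 + (3) * m^+1 * n^+1 + (1) * m^+2 * n^+0) ((4) * m^+0 * n^+2 + (-1) * m^+2 * n^+0) ((7) * m^+2 * n^+0 + (-14) * m^+1 * n^+1 + (12) * m^+0 * n^+2) ((2) * m^+2 * n^+0 + (8) * m^+1 * n^+1 + (-3) * m^+0 * n^+2) p pp p3).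
  by rewrite !expr0; ring.
by rewrite !expr0; ring.
Qed.

Lemma resB (m n : int) (p : nat) : prime p -> p != 3%N ->
  (p%:Z %| (m^+3 - 3* m * n ^+2 + n^+3))%Z -> (p%:Z %| (m^+3 + 3* m ^+2* n + 3* m * n ^+2 + 4* n ^+3))%Z -> gcdz m n = 1%N -> False.
Proof.
move=> pp p3; apply: (step m n _ _ ((1) * m^+0 * n^+2 + (1) * m^+1 * n^+1) ((2) * m^+0 * n^+2 + (-1) * m^+1 * n^+1) ((20) * m^+2 * n^+0 + (9) * m^+1 * n^+1 + (28) * m^+0 * n^+2) ((-11) * m^+2 * n^+0 + (24) * m^+1 * n^+1 + (-7) * m^+0 * n^+2) p pp p3).
  by rewrite !expr0; ring.
by rewrite !expr0; ring.
Qed.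

Lemma resC (m n : int) (p : nat) : prime p -> p != 3%N ->
  (p%:Z %| (m^+3 - 3* m * n ^+2 + n^+3))%Z -> (p%:Z %| (5* m ^+3 - 3* m ^+2* n - 3* m * n ^+2 + 2* n ^+3))%Z -> gcdz m n = 1%N -> False.
Proof.
move=> pp p3; apply: (step m n _ _ ((-15) * m^+0 * n^+2 + (-7) * m^+1 * n^+1 + (20) * m^+2 * n^+0) ((12) * m^+0 * n^+2 + (-1) * m^+1 * n^+1 + (-4) * m^+2 * n^+0) ((-6) * m^+2 * n^+0 + (-1) * m^+1 * n^+1 + (2) * m^+0 * n^+2) ((3) * m^+2 * n^+0 + (2) * m^+1 * n^+1 + (-1) * m^+0 * n^+2) p pp p3).
  by rewrite !expr0; ring.
by rewrite !expr0; ring.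
Qed.

Lemma three_dvd (x : int) : (3 %| x ^+ 3)%Z -> (3 %| x)%Z.
Proof. by rewrite !dvdzE abszX (Euclid_dvdX _ _ (isT : prime 3)) andbT. Qed.

Lemma no9 (m n : int) : gcdz m n = 1%N ->
  ~ (9 %| m^+3 - 3* m * n ^+2 + n^+3)%Z.
Proof.
move=> g h9.
have h3 : (3 %| m^+3 - 3* m * n ^+2 + n^+3)%Z.
  by apply: dvdz_trans h9; apply/dvdzP; exists 3.
have hs : (3 %| (m + n) ^+ 3)%Z.
  have -> : (m + n) ^+ 3 = (m^+3 - 3* m * n ^+2 + n^+3) + 3 * (m^+2 * n + 2 * m * n^+2) by ring.
  by rewrite rpredD // dvdz_mulr.
have /dvdzP [k hk] := three_dvd _ hs.
have en : n = k * 3 - m by rewrite -hk; ring.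
move: h9; rewrite en.
have -> : m ^+ 3 - 3 * m * (k * 3 - m) ^+ 2 + (k * 3 - m) ^+ 3 =
   - (3 * m ^+ 3) + 9 * (3 * m^+2 * k - 6 * m * k^+2 + 3 * k^+3) by ring.
rewrite rpredDr ?dvdz_mulr // rpredN => /dvdzP [q hq].
have hm : (3 %| m ^+ 3)%Z.
  apply/dvdzP; exists q; apply: (@mulfI _ 3) => //; rewrite hq; ring.
have hm1 := three_dvd _ hm.
have hn1 : (3 %| n)%Z by rewrite en rpredB // dvdz_mull.
have : (3 %| gcdz m n)%Z by rewrite dvdz_gcd hm1 hn1.
by rewrite g.
Qed.

Lemma nat_end (d : nat) : (0 < d)%N -> ~~ (9 %| d)%N ->
  (forall p, prime p -> (p %| d)%N -> p = 3%N) -> d = 1%N \/ d = 3%N.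
Proof.
move=> d0 n9 hp.
have [d1|d1] := leqP d 1; first by left; lia.
have h3 := hp _ (pdiv_prime d1) (pdiv_dvd d).
have /dvdnP [r hr] : (3 %| d)%N by rewrite -h3 pdiv_dvd.
have [r1|r1] := leqP r 1.
  right; move: d0; rewrite hr; case: r r1 {hr} => [|[|]] //.
have rd : (r %| d)%N by rewrite hr dvdn_mulr.
have h3' := hp _ (pdiv_prime r1) (dvdn_trans (pdiv_dvd r) rd).
have /dvdnP [s hs] : (3 %| r)%N by rewrite -h3' pdiv_dvd.
by move: n9; rewrite hr hs -mulnA dvdn_mull.
Qed.

Theorem lemma5p1 (m n t : int) :
  gcdz m n = 1%N ->
  (t%:~R : rat) =
    ((-3) * (m^+3 + 3* m ^+2* n - 6* m * n ^+2 + 4* n ^+3)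
          * (m^+3 + 3* m ^+2* n + 3* m * n ^+2 + 4* n ^+3)
          * (5* m ^+3 - 3* m ^+2* n - 3* m * n ^+2 + 2* n ^+3))%:~R
    / ((m^+3 - 3* m * n ^+2 + n^+3) ^+ 3)%:~R ->
  (m^+3 - 3* m * n ^+2 + n^+3 = 1 \/ m^+3 - 3* m * n ^+2 + n^+3 = -1 \/
   m^+3 - 3* m * n ^+2 + n^+3 = 3 \/ m^+3 - 3* m * n ^+2 + n^+3 = -3).
Proof.
move=> g ht.
have n9 := no9 m n g.
have rA := resA m n. have rB := resB m n. have rC := resC m n.
move: n9 rA rB rC ht.
set D := (m^+3 - 3* m * n ^+2 + n^+3).
set A := (m^+3 + 3* m ^+2* n - 6* m * n ^+2 + 4* n ^+3).
set B := (m^+3 + 3* m ^+2* n + 3* m * n ^+2 + 4* n ^+3).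
set C := (5* m ^+3 - 3* m ^+2* n - 3* m * n ^+2 + 2* n ^+3).
move=> n9 rA rB rC ht.
have D0 : D != 0 by apply/eqP => D0; apply: n9; rewrite D0 dvdz0.
have DR : ((D ^+ 3)%:~R : rat) != 0 by rewrite intr_eq0 expf_eq0 negb_and D0 orbT.
have et : t * D ^+ 3 = -3 * A * B * C.
  apply: (@intr_inj rat); rewrite rmorphM /= ht divfK //.
have hDN : (D %| -3 * A * B * C)%Z.
  by rewrite -et; apply/dvdzP; exists (t * D ^+ 2); rewrite exprS; ring.
have hp : forall p, prime p -> (p %| `|D|)%N -> p = 3%N.
  move=> p pp pD; apply/eqP; apply: contraT => p3.
  have pDz : (p%:Z %| D)%Z by rewrite dvdzE.
  have := dvdz_trans pDz hDN.
  rewrite dvdzE !abszM /= !(Euclid_dvdM _ _ pp) (dvdn_prime2 pp) //= (negbTE p3) /=.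
  rewrite -!(dvdzE p%:Z).
  case/orP => [/orP [] h | h].
  - by case: (rA p pp p3 pDz h g).
  - by case: (rB p pp p3 pDz h g).
  - by case: (rC p pp p3 pDz h g).
have d0 : (0 < `|D|)%N by rewrite absz_gt0.
have n9' : ~~ (9 %| `|D|)%N by apply/negP; rewrite -(dvdzE 9) => /n9.
have := nat_end _ d0 n9' hp; clearbody D; clear; case: D => [k|k] /= [] e.
- by rewrite e; left.
- by rewrite e; right; right; left.
- by case: e => ->; right; left.
- by case: e => ->; right; right; right.
Qed.
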